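(* Let $R$ be a principal ideal domain and $n\geq 2$. Let $J$ be the complex of representations of $(Q_{\mathfrak{A}_n},\rho_{\mathfrak{A}_n})$ with $J^{-1}=I_{H_1}\oplus I_{H_2}$, $J^0=\bigoplus_{i=1}^n I_{E_i}\oplus\bigoplus_{i=1}^n I_{P_i}$, $J^1=\bigoplus_{i=1}^n I_{P_i}$, zero elsewhere, with differential $J^{-1}\to J^0$ given by $\begin{pmatrix}\partial^0\\0\end{pmatrix}$ and $J^0\to J^1$ given by $(\partial^1\ \ 0)$, where $\partial^0:I_{H_1}\oplus I_{H_2}\to\bigoplus_i I_{E_i}$ has $E_i$-component $he_{1i}\oplus(-he_{2i})$, and $\partial^1:\bigoplus_j I_{E_j}\to\bigoplus_i I_{P_i}$ has $P_i$-component $e_{ii}$ on $I_{E_i}$, $-e_{(i+1)i}$ on $I_{E_{i+1}}$ and zero on all other summands (indices mod $n$). (This is a resolution of $W_1\oplus\dots\oplus W_n\oplus C[1]$, where $W_i$ has $R$ at $P_i$ and $0$ elsewhere and $C$ has $R$ at every vertex with identity maps.) Then $\operatorname{End} J$ is formal: there are a dg subalgebra $\mathcal{U}\subset\operatorname{End} J$ and a two-sided dg ideal $\mathcal{I}\subset\mathcal{U}$ giving a chain of quasi-isomorphisms of dg algebras $\operatorname{End} J\hookleftarrow\mathcal{U}\twoheadrightarrow\mathcal{U}/\mathcal{I}\hookleftarrow H(\mathcal{U}/\mathcal{I})$.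
   Context: $\mathfrak{A}_n$ ($n\geq 2$) is the stratification of $S^2$ into $n$ points $P_1,\dots,P_n$ in cyclic order on a great circle, the $n$ open arcs $E_1,\dots,E_n$ of that circle, where $E_i$ has endpoints $P_{i-1}$ and $P_i$ (indices mod $n$, so $E_1$ joins $P_n$ and $P_1$), and the two open hemispheres $H_1,H_2$. The quiver $(Q_{\mathfrak{A}_n},\rho_{\mathfrak{A}_n})$ has one vertex per stratum, an arrow $S\to T$ whenever $S\subsetneq\overline T$, and relations identifying all paths with the same endpoints; representations are by $R$-modules. For a stratum $S$, $I_S$ is the representation with $R$ at every vertex $T$ with $T\subset\overline S$ and $0$ elsewhere, identity maps on arrows between copies of $R$, zero otherwise. For $T\subset\overline S$ the canonical morphism $I_S\to I_T$ is the identity of $R$ wherever both have $R$ and zero elsewhere; $he_{ji}:I_{H_j}\to I_{E_i}$ and $e_{ik}:I_{E_i}\to I_{P_k}$ (for $k\in\{i-1,i\}$ mod $n$) denote these canonical morphisms. $\operatorname{End} J$ is the Hom complex of $J$ with its dg algebra structure; a dg algebra is formal if it is connected to its cohomology algebra (zero differential) by a finite chain of quasi-isomorphisms (more generally quasi-equivalences). *)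

(* Defs.v *)
From HB Require Import structures.
From mathcomp Require Import all_boot all_order all_algebra.
Set Implicit Arguments. Unset Strict Implicit. Unset Printing Implicit Defensive.
Import Order.TTheory GRing.Theory Num.Theory.
Local Open Scope ring_scope.

Definition is_pid (R : idomainType) : Prop :=
  forall I : R -> Prop,
    I 0 -> (forall x y, I x -> I y -> I (x - y)) -> (forall a x, I x -> I (a * x)) ->
    exists g : R, forall x, I x <-> exists c : R, x = c * g.

Section A.
Variable n : nat.

(* ---------- Strata of A_n (0-based indices, mod n) ----------
   Pt i = P_i, Ed i = E_i with endpoints P_(i-1) and P_i, Hm false = H_1, Hm true = H_2. *)
Inductive strat := Pt of 'I_n | Ed of 'I_n | Hm of bool.

(* stle S T  <=>  S is contained in the closure of T *)
Definition stle (S T : strat) : bool :=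
  match S, T with
  | Pt k, Pt k' => k == k'
  | Pt k, Ed i => (k == i) || (k == ord_pred i)
  | Pt _, Hm _ => true
  | Ed i, Ed i' => i == i'
  | Ed _, Hm _ => true
  | Hm j, Hm j' => j == j'
  | _, _ => false
  end.

Definition stlt (S T : strat) : Prop := stle S T /\ S <> T.
(* arrows of the quiver: S -> T whenever S is strictly contained in closure(T) *)

(* ---------- Summands of the total graded object of J ----------
   inl (inl (inl b)) : I_{H_b} in degree -1
   inl (inl (inr i)) : I_{E_i} in degree 0
   inl (inr i)       : I_{P_i} in degree 0
   inr i             : I_{P_i} in degree 1 *)
Definition summ : finType := (bool + 'I_n + 'I_n + 'I_n)%type.

Definition sm_strat (s : summ) : strat :=
  match s with
  | inl (inl (inl b)) => Hm b
  | inl (inl (inr i)) => Ed i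
  | inl (inr i) => Pt i
  | inr i => Pt i
  end.

Definition sm_deg (s : summ) : int :=
  match s with
  | inl (inl (inl _)) => (-1)%R
  | inl (inl (inr _)) => 0
  | inl (inr _) => 0
  | inr _ => 1
  end.

Definition N : nat := #|summ|.
Definition deg (k : 'I_N) : int := sm_deg (enum_val k).

(* I_S has R at vertex T iff T is in closure(S); so the summand s contributes a copy
   of R to J(T) iff stle T (sm_strat s). *)
Definition supp (T : strat) (k : 'I_N) : bool := stle T (sm_strat (enum_val k)).

Variable R : idomainType.

(* J(T) is the submodule of R^N of vectors supported on supp T; the structure map of the
   arrow T -> T' is the (diagonal) projection onto supp T'. *)
Definition Pi (T : strat) : 'M[R]_N := \matrix_(i, j) (if (i == j) && supp T i then 1 else 0).

(* the differential of J as a matrix on R^N (column convention: entry (target, source)) *)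
Definition Dcoef (tgt src : summ) : R :=
  match src, tgt with
  | inl (inl (inl b)), inl (inl (inr i)) => if b then -1 else 1   (* he_{1i} (+) (-he_{2i}) *)
  | inl (inl (inr j)), inr i =>
      if j == i then 1 else if j == ordS i then -1 else 0           (* e_{ii}, -e_{(i+1)i} *)
  | _, _ => 0
  end.

Definition Dmx : 'M[R]_N := \matrix_(i, j) Dcoef (enum_val i) (enum_val j).

(* differential of J at vertex T (canonical morphisms: identity where both sides have R) *)
Definition dJ (T : strat) : 'M[R]_N := Pi T *m Dmx *m Pi T.

Definition sgn : 'M[R]_N :=
  \matrix_(i, j) (if i == j then (if odd `|deg i|%N then -1 else 1) else 0).

Definition amb := strat -> 'M[R]_N.

(* F is an element of End J = (+)_p prod_k Hom_rep(J^k, J^(k+p)):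
   F_T is an endomorphism of J(T) and F is a morphism of representations. *)
Definition inEnd (F : amb) : Prop :=
  (forall T, F T = Pi T *m F T *m Pi T) /\
  (forall T T', stlt T T' -> Pi T' *m F T *m Pi T = F T' *m Pi T' *m Pi T).

Definition amb0 : amb := fun _ => 0.
Definition ambD (F G : amb) : amb := fun T => F T + G T.
Definition ambB (F G : amb) : amb := fun T => F T - G T.
Definition ambZ (a : R) (F : amb) : amb := fun T => a *: F T.
Definition ambM (F G : amb) : amb := fun T => F T *m G T.
Definition amb1 : amb := fun T => Pi T.

(* differential of End J: delta F = d o F - (-1)^|F| F o d *)
Definition delta (F : amb) : amb := fun T => dJ T *m F T - sgn *m F T *m sgn *m dJ T.

Definition homog (p : int) (F : amb) : Prop :=
  forall T (s t : 'I_N), F T s t != 0 -> deg s = deg t + p.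

Definition comp (p : int) (F : amb) : amb :=
  fun T => \matrix_(s, t) (if deg s == deg t + p then F T s t else 0).

Definition psubset (X Y : amb -> Prop) : Prop := forall x, X x -> Y x.

Definition dg_submod (X : amb -> Prop) : Prop :=
  [/\ X amb0, (forall x y, X x -> X y -> X (ambD x y)),
      (forall a x, X x -> X (ambZ a x)), (forall p x, X x -> X (comp p x))
    & (forall x, X x -> X (delta x))].

Definition dg_subalg (U : amb -> Prop) : Prop :=
  [/\ psubset U inEnd, dg_submod U, U amb1 & (forall x y, U x -> U y -> U (ambM x y))].

Definition dg_ideal (U I : amb -> Prop) : Prop :=
  [/\ psubset I U, dg_submod I, (forall x y, U x -> I y -> I (ambM x y))
    & (forall x y, I x -> U y -> I (ambM x y))].

(* Subquotient complex X/Y (Y inside X), degree p cocycles and coboundaries,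
   described by representatives in X. *)
Definition cocycle (X Y : amb -> Prop) (p : int) (x : amb) : Prop :=
  [/\ X x, homog p x & Y (delta x)].
Definition cobdry (X Y : amb -> Prop) (p : int) (x : amb) : Prop :=
  [/\ X x, homog p x & exists y, [/\ X y, homog (p - 1) y & Y (ambB x (delta y))]].

(* The map X1/Y1 -> X2/Y2 induced by the identity (X1 ⊆ X2, Y1 ⊆ Y2) is a
   quasi-isomorphism: it induces a bijection H^p(X1/Y1) -> H^p(X2/Y2) for every p. *)
Definition qiso (X1 Y1 X2 Y2 : amb -> Prop) : Prop :=
  [/\ psubset X1 X2, psubset Y1 Y2 &
  forall p : int,
    (forall z, cocycle X2 Y2 p z -> exists x, cocycle X1 Y1 p x /\ cobdry X2 Y2 p (ambB z x)) /\
    (forall x, cocycle X1 Y1 p x -> cobdry X2 Y2 p x -> cobdry X1 Y1 p x)].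

Definition zeroP (x : amb) : Prop := x = amb0.

End A.

(* Main.v *)
Require Import Defs.
From HB Require Import structures.
From mathcomp Require Import all_boot all_order all_algebra.
From Stdlib Require Import FunctionalExtensionality Classical.
Set Implicit Arguments. Unset Strict Implicit. Unset Printing Implicit Defensive.
Import Order.TTheory GRing.Theory Num.Theory.
Local Open Scope ring_scope.

Section Main.
Variable n : nat.
Variable R : idomainType.
Hypothesis hn : (2 <= n)%N.

Local Notation sm := (summ n).
Local Notation MX := 'M[R]_(N n).

Local Notation sH b := (inl (inl (inl b)) : sm).
Local Notation sE i := (inl (inl (inr i)) : sm).
Local Notation sW i := (inl (inr i) : sm).
Local Notation sQ i := (inr i : sm).

Lemma inl_eq (A B : eqType) (x y : A) : (inl x == inl y :> A + B) = (x == y).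
Proof. by apply/eqP/eqP => [[]|->]. Qed.
Lemma inr_eq (A B : eqType) (x y : B) : (inr x == inr y :> A + B) = (x == y).
Proof. by apply/eqP/eqP => [[]|->]. Qed.
Lemma inlr_eq (A B : eqType) (x : A) (y : B) : (inl x == inr y :> A + B) = false.
Proof. by apply/eqP. Qed.
Lemma inrl_eq (A B : eqType) (x : A) (y : B) : (inr y == inl x :> A + B) = false.
Proof. by apply/eqP. Qed.
Definition eqsm := (inl_eq, inr_eq, inlr_eq, inrl_eq).

Definition ent (M : MX) (t s : sm) : R := M (enum_rank t) (enum_rank s).
Definition mk (f : sm -> sm -> R) : MX := \matrix_(i, j) f (enum_val i) (enum_val j).

Lemma entK f t s : ent (mk f) t s = f t s.
Proof. by rewrite /ent /mk mxE !enum_rankK. Qed.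

Lemma mx_eq (A B : MX) : (forall t s, ent A t s = ent B t s) -> A = B.
Proof.
move=> h; apply/matrixP => i j.
have := h (enum_val i) (enum_val j); by rewrite /ent !enum_valK.
Qed.

Lemma ent_mul (A B : MX) t s : ent (A *m B) t s = \sum_(u : sm) ent A t u * ent B u s.
Proof.
rewrite /ent mxE (reindex (@enum_rank sm)) //=.
by apply: onW_bij; apply: enum_rank_bij.
Qed.

Lemma entD (A B : MX) t s : ent (A + B) t s = ent A t s + ent B t s.
Proof. by rewrite /ent mxE. Qed.
Lemma entB (A B : MX) t s : ent (A - B) t s = ent A t s - ent B t s.
Proof. by rewrite /ent !mxE. Qed.
Lemma entN (A : MX) t s : ent (- A) t s = - ent A t s.
Proof. by rewrite /ent !mxE. Qed.
Lemma entZ a (A : MX) t s : ent (a *: A) t s = a * ent A t s.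
Proof. by rewrite /ent mxE. Qed.
Lemma ent0 t s : ent (0 : MX) t s = 0.
Proof. by rewrite /ent mxE. Qed.
Lemma ent1 t s : ent (1%:M : MX) t s = (t == s)%:R.
Proof. by rewrite /ent mxE (inj_eq (can_inj (@enum_rankK sm))). Qed.

Lemma sum1 (F : sm -> R) u0 : (forall u, u != u0 -> F u = 0) -> \sum_u F u = F u0.
Proof.
move=> h; rewrite (bigD1 u0) //= big1 ?addr0 // => u /h //.
Qed.

Lemma sum2 (F : sm -> R) u0 u1 : u0 != u1 ->
  (forall u, u != u0 -> u != u1 -> F u = 0) -> \sum_u F u = F u0 + F u1.
Proof.
move=> h01 h; rewrite (bigD1 u0) //= (bigD1 u1) /=; last by rewrite eq_sym.
rewrite big1 ?addr0 // => u /andP[hu1 hu0]; exact: h.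
Qed.


Lemma stle_refl (T : strat n) : stle T T.
Proof. by case: T => * /=. Qed.

Lemma stle_trans (a b c : strat n) : stle a b -> stle b c -> stle a c.
Proof.
case: a => [k|i|x]; case: b => [k'|i'|x']; case: c => [k''|i''|x''] //=;
 try (by move=> /eqP-> //); try (by move=> _ /eqP <- //).
Qed.

Definition sgv (t : sm) : R := if odd `|sm_deg t|%N then -1 else 1.

Lemma entPi T t s : ent (Pi R T) t s = if (t == s) && stle T (sm_strat t) then 1 else 0.
Proof. by rewrite /ent mxE (inj_eq (can_inj (@enum_rankK sm))) /supp enum_rankK. Qed.

Lemma entS t s : ent (sgn n R) t s = if t == s then sgv t else 0.
Proof. by rewrite /ent mxE (inj_eq (can_inj (@enum_rankK sm))) /deg enum_rankK. Qed.

Lemma entD_ t s : ent (Dmx n R) t s = Dcoef R t s.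
Proof. by rewrite /ent mxE !enum_rankK. Qed.

Lemma ent_PiM T (M : MX) t s : ent (Pi R T *m M) t s = if stle T (sm_strat t) then ent M t s else 0.
Proof.
rewrite ent_mul (sum1 (u0:=t)) ?entPi ?eqxx /=; first by case: ifP; rewrite ?mul1r ?mul0r.
by move=> u hu; rewrite entPi eq_sym (negbTE hu) mul0r.
Qed.

Lemma ent_MPi T (M : MX) t s : ent (M *m Pi R T) t s = if stle T (sm_strat s) then ent M t s else 0.
Proof.
rewrite ent_mul (sum1 (u0:=s)) ?entPi ?eqxx /=; first by case: ifP; rewrite ?mulr1 ?mulr0.
by move=> u hu; rewrite entPi (negbTE hu) mulr0.
Qed.

Lemma ent_SM (M : MX) t s : ent (sgn n R *m M) t s = sgv t * ent M t s.
Proof.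
rewrite ent_mul (sum1 (u0:=t)) ?entS ?eqxx //.
by move=> u hu; rewrite entS eq_sym (negbTE hu) mul0r.
Qed.

Lemma ent_MS (M : MX) t s : ent (M *m sgn n R) t s = ent M t s * sgv s.
Proof.
rewrite ent_mul (sum1 (u0:=s)) ?entS ?eqxx //.
by move=> u hu; rewrite entS (negbTE hu) mulr0.
Qed.

Definition emb (M : MX) : amb n R := fun T => Pi R T *m M *m Pi R T.
Definition downm (M : MX) := forall t s, ~~ stle (sm_strat t) (sm_strat s) -> ent M t s = 0.
Definition mdelta (M : MX) : MX := Dmx n R *m M - sgn n R *m M *m sgn n R *m Dmx n R.
Definition mhom (p : int) (M : MX) := forall t s, ent M t s != 0 -> sm_deg t = sm_deg s + p.
Definition mcomp (p : int) (M : MX) : MX :=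
  mk (fun t s => if sm_deg t == sm_deg s + p then ent M t s else 0).

Lemma ent_emb M T t s : ent (emb M T) t s =
  if stle T (sm_strat t) && stle T (sm_strat s) then ent M t s else 0.
Proof. rewrite /emb ent_MPi ent_PiM; by case: (stle T _); case: (stle T _). Qed.

Lemma embE (F : amb n R) G : (forall T t s, ent (F T) t s = ent (G T) t s) -> F = G.
Proof. move=> h; apply: functional_extensionality => T; apply: mx_eq; exact: h. Qed.

Lemma emb_mulT A B T : downm A -> downm B -> emb A T *m emb B T = emb (A *m B) T.
Proof.
move=> dA dB; apply: mx_eq => t s; rewrite ent_mul ent_emb ent_mul.
case hT: (stle T (sm_strat t)); case hS: (stle T (sm_strat s)) => /=.
- apply: eq_bigr => u _; rewrite !ent_emb hT hS /=.
  case hu: (stle T (sm_strat u)) => //=.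
  rewrite dA ?mul0r ?mulr0 //; apply/negP => h; by rewrite (stle_trans hT h) in hu.
- by apply: big1 => u _; rewrite !ent_emb hS /= andbF mulr0.
- by apply: big1 => u _; rewrite !ent_emb hT /= mul0r.
- by apply: big1 => u _; rewrite !ent_emb hT /= mul0r.
Qed.

Lemma emb_mul A B : downm A -> downm B -> ambM (emb A) (emb B) = emb (A *m B).
Proof. move=> dA dB; apply: functional_extensionality => T; exact: emb_mulT. Qed.

Lemma downD A B : downm A -> downm B -> downm (A + B).
Proof. by move=> dA dB t s h; rewrite entD dA ?dB ?addr0. Qed.
Lemma downB A B : downm A -> downm B -> downm (A - B).
Proof. by move=> dA dB t s h; rewrite entB dA ?dB ?subr0. Qed.
Lemma downZ a A : downm A -> downm (a *: A).
Proof. by move=> dA t s h; rewrite entZ dA ?mulr0. Qed.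
Lemma down0 : downm 0.
Proof. by move=> t s _; rewrite ent0. Qed.
Lemma down1 : downm 1%:M.
Proof. move=> t s h; rewrite ent1; case: eqP h => // ->; by rewrite stle_refl. Qed.
Lemma downM A B : downm A -> downm B -> downm (A *m B).
Proof.
move=> dA dB t s h; rewrite ent_mul big1 // => u _.
case hu: (stle (sm_strat t) (sm_strat u)); last by rewrite dA ?hu ?mul0r.
rewrite dB ?mulr0 //; apply/negP => h'; by rewrite (stle_trans hu h') in h.
Qed.
Lemma downS A : downm A -> downm (sgn n R *m A *m sgn n R).
Proof. by move=> dA t s h; rewrite ent_MS ent_SM dA ?mulr0 ?mul0r. Qed.

Lemma downDmx : downm (Dmx n R).
Proof.
move=> t s; rewrite entD_.
case: t => [[[a|i]|i]|i]; case: s => [[[b|j]|j]|j] //=.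
rewrite negb_or => /andP[h1 h2].
rewrite eq_sym (negbTE h1); case: eqP => // e; move: h2; by rewrite e ordSK eqxx.
Qed.

Lemma emb_lin A B T : emb (A - B) T = emb A T - emb B T.
Proof. by rewrite /emb mulmxBr mulmxBl. Qed.

Lemma S_emb M T : sgn n R *m emb M T *m sgn n R = emb (sgn n R *m M *m sgn n R) T.
Proof.
apply: mx_eq => t s; rewrite ent_MS ent_SM !ent_emb ent_MS ent_SM.
by case: ifP; rewrite ?mulr0 ?mul0r.
Qed.

Lemma emb_delta M : downm M -> delta (emb M) = emb (mdelta M).
Proof.
move=> dM; apply: functional_extensionality => T.
rewrite /delta /mdelta emb_lin.
have -> : dJ R T = emb (Dmx n R) T by reflexivity.
by rewrite S_emb (emb_mulT T downDmx dM) (emb_mulT T (downS dM) downDmx).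
Qed.

Lemma PiPi (T : strat n) : Pi R T *m Pi R T = Pi R T.
Proof.
apply: mx_eq => t s; rewrite ent_PiM entPi.
by case: (stle T _); rewrite ?andbT ?andbF //; case: eqP.
Qed.

Lemma inEnd_emb M : downm M -> inEnd (emb M).
Proof.
move=> dM; split.
- by move=> T; rewrite /emb !mulmxA PiPi -!mulmxA PiPi.
- move=> T T' [hTT' _]; apply: mx_eq => t s.
  rewrite !ent_MPi !ent_PiM !ent_MPi !ent_PiM.
  case h1: (stle T' (sm_strat t)); last by rewrite !if_same.
  rewrite (stle_trans hTT' h1) /=.
  case h2: (stle T (sm_strat s)); case h3: (stle T' (sm_strat s)) => //=.
  all: try by rewrite (stle_trans hTT' h3) in h2.
  all: apply: dM; apply/negP => h; by rewrite (stle_trans h1 h) in h3.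
Qed.

Lemma inEnd_ex (F : amb n R) : inEnd F -> exists M, downm M /\ F = emb M.
Proof.
move=> [h1 h2].
exists (mk (fun t s => if stle (sm_strat t) (sm_strat s) then ent (F (sm_strat t)) t s else 0)).
split.
- by move=> t s h; rewrite entK (negbTE h).
- apply: embE => T t s; rewrite ent_emb entK.
  rewrite h1 ent_MPi ent_PiM.
  case hT: (stle T (sm_strat t)); case hS: (stle T (sm_strat s)) => //=.
  case: (classic (T = sm_strat t)) => [<-|ne]; first by rewrite hS.
  have := h2 T (sm_strat t) (conj hT ne).
  move/(congr1 (fun X => ent X t s)); rewrite ent_MPi ent_PiM ent_MPi ent_MPi.
  rewrite stle_refl hS /= => ->.
  by case: (stle (sm_strat t) (sm_strat s)).
Qed.

Lemma emb_inj A B : downm A -> downm B -> emb A = emb B -> A = B.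
Proof.
move=> dA dB e; apply: mx_eq => t s.
case h: (stle (sm_strat t) (sm_strat s)); last by rewrite dA ?dB ?h.
have := congr1 (fun F => ent (F (sm_strat t)) t s) e; by rewrite /= !ent_emb stle_refl h.
Qed.

Lemma homog_emb p M : downm M -> homog p (emb M) <-> mhom p M.
Proof.
move=> dM; split.
- move=> h t s hts.
  have := h (sm_strat t) (enum_rank t) (enum_rank s).
  rewrite /deg !enum_rankK; apply.
  have := hts; rewrite -/(ent (emb M (sm_strat t)) t s) ent_emb stle_refl.
  case hh: (stle _ _) => //; by rewrite dM ?hh ?eqxx.
- move=> h T i j; rewrite -(enum_valK i) -(enum_valK j) -/(ent _ _ _) ent_emb /deg !enum_valK.
  case: ifP => _; [exact: h | by rewrite eqxx].
Qed.

Lemma comp_emb p M : Defs.comp p (emb M) = emb (mcomp p M).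
Proof.
apply: embE => T t s; rewrite ent_emb /Defs.comp /ent mxE /deg !enum_rankK.
rewrite -/(ent _ _ _) ent_emb -/(ent _ _ _) entK.
by case: ifP; case: ifP.
Qed.

Lemma downC p M : downm M -> downm (mcomp p M).
Proof. by move=> dM t s h; rewrite entK dM ?if_same. Qed.

Lemma amb0_emb : @amb0 n R = emb 0.
Proof. by apply: embE => T t s; rewrite ent_emb ent0 if_same. Qed.

Lemma amb1_emb : amb1 R = emb 1%:M.
Proof. by apply: functional_extensionality => T; rewrite /emb mulmx1 PiPi. Qed.

Lemma ambD_emb A B : ambD (emb A) (emb B) = emb (A + B).
Proof. by apply: functional_extensionality => T; rewrite /ambD /emb mulmxDr mulmxDl. Qed.
Lemma ambB_emb A B : ambB (emb A) (emb B) = emb (A - B).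
Proof. by apply: functional_extensionality => T; rewrite /ambB emb_lin. Qed.
Lemma ambZ_emb a A : ambZ a (emb A) = emb (a *: A).
Proof. by apply: functional_extensionality => T; rewrite /ambZ /emb scalemxAl scalemxAr. Qed.

Lemma ordS_neq (i : 'I_n) : ordS i != i.
Proof.
apply/eqP => /(congr1 val) /=.
case: (ltnP i.+1 n) => h; first by rewrite modn_small // => /eqP; rewrite gtn_eqF.
have e : i.+1 = n by apply/eqP; rewrite eqn_leq h ltn_ord.
rewrite e modnn => e0; move: hn; by rewrite -e -e0.
Qed.

Lemma ordS_pred (i j : 'I_n) : (j == ordS i) = (ord_pred j == i).
Proof. by rewrite (can2_eq (@ord_predK n) (@ordSK n)). Qed.

Lemma pred_ordS (i k : 'I_n) : (i == ord_pred k) = (k == ordS i).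
Proof. by rewrite ordS_pred eq_sym. Qed.

Local Notation D := (Dmx n R).
Local Notation S := (sgn n R).

Lemma sgvE_H b : sgv (sH b) = -1. Proof. by []. Qed.
Lemma sgvE_E i : sgv (sE i) = 1. Proof. by []. Qed.
Lemma sgvE_W i : sgv (sW i) = 1. Proof. by []. Qed.
Lemma sgvE_Q i : sgv (sQ i) = -1. Proof. by []. Qed.

Lemma DD : D *m D = 0.
Proof.
apply: mx_eq => t s; rewrite ent_mul ent0.
case: t => [[[a|i]|i]|i]; case: s => [[[b|j]|j]|j];
  try (by apply: big1 => u _; rewrite !entD_; case: u => [[[c|k]|k]|k]; rewrite /= ?mul0r ?mulr0).
rewrite (sum2 (u0 := sE i) (u1 := sE (ordS i))).
- rewrite !entD_ /= eqxx (negbTE (ordS_neq i)) eqxx.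
  by case: b; rewrite ?mulN1r ?mul1r ?mulNr subrr // addrC subrr.
- by rewrite !eqsm eq_sym ordS_neq.
- move=> u; rewrite !entD_; case: u => [[[c|k]|k]|k]; rewrite /= ?mul0r ?mulr0 //.
  by rewrite !eqsm => /negbTE-> /negbTE->; rewrite mul0r.
Qed.

Lemma SS : S *m S = 1%:M.
Proof.
apply: mx_eq => t s; rewrite ent_SM entS ent1.
case: eqP => [->|_]; last by rewrite mulr0.
by rewrite /sgv; case: odd; rewrite ?mulN1r ?opprK ?mul1r.
Qed.

Lemma SDS : S *m D *m S = - D.
Proof.
apply: mx_eq => t s; rewrite ent_MS ent_SM entN entD_.
case: t => [[[a|i]|i]|i]; case: s => [[[b|j]|j]|j];
  rewrite /= ?mul0r ?mulr0 ?oppr0 ?mul1r ?mulr1 ?mulN1r ?mulrN1 // ?opprK.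
all: by rewrite oppr0.
Qed.

Lemma mdelta2 M : mdelta (mdelta M) = 0.
Proof.
rewrite /mdelta !mulmxBr !mulmxBl !mulmxA DD mul0mx sub0r.
have e1 : S *m S *m M *m S *m D *m S *m D = 0.
  rewrite SS mul1mx.
  have -> : M *m S *m D *m S *m D = M *m (S *m D *m S) *m D by rewrite !mulmxA.
  by rewrite SDS mulmxN mulNmx -mulmxA DD mulmx0 oppr0.
have e2 : S *m D *m M *m S *m D = - (D *m S *m M *m S *m D).
  have -> : S *m D *m M *m S *m D = (S *m D *m S) *m (S *m M *m S *m D).
    by rewrite !mulmxA -(mulmxA (S *m D) S S) SS mulmx1.
  by rewrite SDS mulNmx !mulmxA.
by rewrite e1 e2 subr0 opprK addrC subrr.
Qed.

Lemma ent_SMS M t s : ent (S *m M *m S) t s = sgv t * ent M t s * sgv s.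
Proof. by rewrite ent_MS ent_SM. Qed.

Ltac negs := repeat match goal with H : is_true (?x != ?y) |- _ =>
   first [ rewrite (negbTE H) | rewrite [y == x]eq_sym (negbTE H) ] end.

Ltac zt dM := let u := fresh "u" in move=> u; case: u => [[[?|?]|?]|?]; rewrite ?eqsm => *;
  rewrite ?ent_SMS ?entD_ /= ?mul0r ?mulr0 //; negs; rewrite ?mul0r ?mulr0 //;
  try (rewrite dM ?mulr0 ?mul0r //= 1?eq_sym //; fail);
  try (rewrite dM ?mulr0 ?mul0r //= ?pred_ordS; negs; done).

Lemma tEH M i b : downm M -> ent (mdelta M) (sE i) (sH b) =
  (if b then -1 else 1) * (ent M (sH b) (sH b) - ent M (sE i) (sE i)).
Proof.
move=> dM; rewrite /mdelta entB !ent_mul.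
rewrite (sum1 (u0 := sH b)); last first.
  zt dM.
rewrite (sum1 (u0 := sE i)); last first.
  zt dM.
by rewrite ent_SMS !entD_ sgvE_E mul1r mulr1 mulrBr [ent M (sE i) _ * _]mulrC.
Qed.

Lemma tQH M i b : downm M -> ent (mdelta M) (sQ i) (sH b) =
  ent M (sE i) (sH b) - ent M (sE (ordS i)) (sH b)
  + (if b then -1 else 1) * (ent M (sQ i) (sE i) + ent M (sQ i) (sE (ordS i))).
Proof.
move=> dM; have hne : sE i != sE (ordS i) by rewrite !eqsm eq_sym ordS_neq.
rewrite /mdelta entB !ent_mul.
rewrite (sum2 (u0 := sE i) (u1 := sE (ordS i))) //; last first.
  zt dM.
rewrite (sum2 (u0 := sE i) (u1 := sE (ordS i))) //; last first.
  zt dM.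
rewrite !ent_SMS !entD_ /= eqxx (negbTE (ordS_neq i)) eqxx sgvE_Q sgvE_E.
rewrite !mul1r !mulN1r !mulr1 !mulNr -opprD opprK mulrDr.
by rewrite [_ * ent M (sQ i) (sE i)]mulrC [_ * ent M (sQ i) (sE (ordS i))]mulrC.
Qed.

Lemma tQE M i j : downm M -> ent (mdelta M) (sQ i) (sE j) =
  Dcoef R (sQ i) (sE j) * (ent M (sE j) (sE j) - ent M (sQ i) (sQ i)).
Proof.
move=> dM; rewrite /mdelta entB !ent_mul.
rewrite (sum1 (u0 := sE j)); last by zt dM.
rewrite (sum1 (u0 := sQ i)); last by zt dM.
rewrite ent_SMS !entD_ sgvE_Q mulN1r mulrN1 opprK mulrBr.
by rewrite [ent M (sQ i) _ * _]mulrC.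
Qed.

Lemma tWH M i b : downm M -> ent (mdelta M) (sW i) (sH b) =
  - ((if b then -1 else 1) * (ent M (sW i) (sE i) + ent M (sW i) (sE (ordS i)))).
Proof.
move=> dM; have hne : sE i != sE (ordS i) by rewrite !eqsm eq_sym ordS_neq.
rewrite /mdelta entB !ent_mul.
rewrite big1; last by zt dM.
rewrite (sum2 (u0 := sE i) (u1 := sE (ordS i))) //; last by zt dM.
rewrite !ent_SMS !entD_ /= sgvE_W !sgvE_E !mul1r !mulr1 sub0r mulrDr.
by rewrite [_ * ent M (sW i) (sE i)]mulrC [_ * ent M (sW i) (sE (ordS i))]mulrC.
Qed.

Lemma tWE M i j : downm M -> ent (mdelta M) (sW i) (sE j) =
  ent M (sW i) (sQ i) * Dcoef R (sQ i) (sE j).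
Proof.
move=> dM; rewrite /mdelta entB !ent_mul.
rewrite big1; last by zt dM.
rewrite (sum1 (u0 := sQ i)); last by zt dM.
by rewrite ent_SMS !entD_ sgvE_W sgvE_Q mul1r mulrN1 mulNr opprK add0r.
Qed.

Definition shape (t s : sm) : bool :=
  match t, s with
  | inl (inl (inr _)), inl (inl (inl _)) => true
  | inr _, inl (inl (inl _)) => true
  | inr _, inl (inl (inr _)) => true
  | inl (inr _), inl (inl (inl _)) => true
  | inl (inr _), inl (inl (inr _)) => true
  | _, _ => false
  end.

Lemma tZ M t s : downm M -> ~~ shape t s -> ent (mdelta M) t s = 0.
Proof.
move=> dM; rewrite /mdelta entB !ent_mul.
case: t => [[[a|i]|i]|i]; case: s => [[[b|j]|j]|j] //= _;
 rewrite !big1 ?subr0 //; zt dM.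
Qed.

Lemma mhomD p A B : mhom p A -> mhom p B -> mhom p (A + B).
Proof.
move=> hA hB t s; rewrite entD.
case: (eqVneq (ent A t s) 0) => [->|/hA //]; rewrite add0r; exact: hB.
Qed.
Lemma mhomN p A : mhom p A -> mhom p (- A).
Proof. by move=> hA t s; rewrite entN oppr_eq0; exact: hA. Qed.
Lemma mhomB p A B : mhom p A -> mhom p B -> mhom p (A - B).
Proof. by move=> hA hB; apply: mhomD => //; exact: mhomN. Qed.
Lemma mhomZ p a A : mhom p A -> mhom p (a *: A).
Proof.
move=> hA t s; rewrite entZ; case: (eqVneq (ent A t s) 0) => [->|/hA //].
by rewrite mulr0 eqxx.
Qed.
Lemma mhom0 p : mhom p 0.
Proof. by move=> t s; rewrite ent0 eqxx. Qed.

Lemma sum_nz (F : sm -> R) : \sum_u F u != 0 -> exists u, F u != 0.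
Proof.
move=> h; case: (pickP (fun u => F u != 0)) => [u hu|none]; first by exists u.
by move: h; rewrite big1 ?eqxx // => u _; move: (none u) => /negbFE/eqP.
Qed.

Lemma mhomM a b A B : mhom a A -> mhom b B -> mhom (a + b) (A *m B).
Proof.
move=> hA hB t s; rewrite ent_mul => /sum_nz [u]; rewrite mulf_eq0 negb_or => /andP[h1 h2].
by rewrite (hA _ _ h1) (hB _ _ h2) -addrA [b + a]addrC.
Qed.

Lemma mhomDmx : mhom 1 D.
Proof.
move=> t s; rewrite entD_.
by case: t => [[[a|i]|i]|i]; case: s => [[[b|j]|j]|j]; rewrite /= ?eqxx.
Qed.

Lemma mhomS : mhom 0 S.
Proof. move=> t s; rewrite entS; case: (t =P s) => [-> _|_]; [by rewrite addr0 | by rewrite eqxx]. Qed.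

Lemma mhom_delta p M : mhom p M -> mhom (p + 1) (mdelta M).
Proof.
move=> hM; apply: mhomB; first by rewrite addrC; apply: mhomM => //; exact: mhomDmx.
have := mhomM (mhomM (mhomM mhomS hM) mhomS) mhomDmx.
by rewrite add0r addr0.
Qed.

Lemma mhom_comp p q M : mhom p M -> mhom p (mcomp q M).
Proof. by move=> hM t s; rewrite entK; case: ifP => _; [exact: hM|rewrite eqxx]. Qed.

Lemma mhom_compq q M : mhom q (mcomp q M).
Proof. by move=> t s; rewrite entK; case: (sm_deg t =P sm_deg s + q) => // _; rewrite eqxx. Qed.

Definition i0 : 'I_n := Ordinal (leq_trans (isT : (0 < 2)%N) hn).

Definition aU (t s : sm) : bool :=
  match t, s with
  | inl (inl (inl a)), inl (inl (inl b)) => a == b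
  | inl (inl (inr i)), inl (inl (inr j)) => i == j
  | inl (inr i), inl (inr j) => i == j
  | inr i, inr j => i == j
  | inr i, inl (inr j) => i == j
  | inl (inr _), inl (inl (inl b)) => ~~ b
  | inr _, inl (inl (inl b)) => ~~ b
  | inl (inl (inr _)), inl (inl (inl b)) => ~~ b
  | _, _ => false
  end.

Definition aI (t s : sm) : bool :=
  match t, s with
  | inl (inl (inr i)), inl (inl (inl b)) => ~~ b && (i != i0)
  | inr _, inl (inl (inl b)) => ~~ b
  | _, _ => false
  end.

Definition aS (t s : sm) : bool :=
  match t, s with
  | inl (inl (inr i)), inl (inl (inl b)) => ~~ b && (i != i0)
  | _, _ => aU t s
  end.

Ltac cb := intros; repeat match goal with
  | H : is_true (_ && _) |- _ => case/andP: H => ??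
  | H : is_true (?x == ?y) |- _ => move/eqP: H => ?; subst
  | H : is_true (~~ ?b) |- _ => is_var b; move/negbTE: H => ?; subst
  end; rewrite /= ?eqxx ?andbT //.

Lemma aU_down t s : aU t s -> stle (sm_strat t) (sm_strat s).
Proof. by case: t => [[[a|i]|i]|i]; case: s => [[[b|j]|j]|j] //=; cb. Qed.

Lemma aI_aU t s : aI t s -> aU t s.
Proof. by case: t => [[[a|i]|i]|i]; case: s => [[[b|j]|j]|j] //=; cb. Qed.

Lemma aS_aU t s : aS t s -> aU t s.
Proof. by case: t => [[[a|i]|i]|i]; case: s => [[[b|j]|j]|j] //=; cb. Qed.

Lemma aU_refl t : aU t t.
Proof. by case: t => [[[a|i]|i]|i] /=. Qed.

Lemma aS_refl t : aS t t.
Proof. by case: t => [[[a|i]|i]|i] /=. Qed.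


Lemma aU_trans t u s : aU t u -> aU u s -> aU t s.
Proof.
by case: t => [[[a|i]|i]|i]; case: u => [[[c|k]|k]|k]; case: s => [[[b|j]|j]|j] //=; cb.
Qed.

Lemma aS_trans t u s : aS t u -> aS u s -> aS t s.
Proof.
by case: t => [[[a|i]|i]|i]; case: u => [[[c|k]|k]|k]; case: s => [[[b|j]|j]|j] //=; cb.
Qed.

Lemma aUI t u s : aU t u -> aI u s -> aI t s.
Proof.
by case: t => [[[a|i]|i]|i]; case: u => [[[c|k]|k]|k]; case: s => [[[b|j]|j]|j] //=; cb.
Qed.

Lemma aIU t u s : aI t u -> aU u s -> aI t s.
Proof.
by case: t => [[[a|i]|i]|i]; case: u => [[[c|k]|k]|k]; case: s => [[[b|j]|j]|j] //=; cb.
Qed.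

Lemma mul_rel (P Q Rl : sm -> sm -> bool) A B :
  (forall t s, ~~ P t s -> ent A t s = 0) -> (forall t s, ~~ Q t s -> ent B t s = 0) ->
  (forall t u s, P t u -> Q u s -> Rl t s) ->
  forall t s, ~~ Rl t s -> ent (A *m B) t s = 0.
Proof.
move=> hA hB hPQ t s hR; rewrite ent_mul big1 // => u _.
case hP: (P t u); last by rewrite hA ?hP ?mul0r.
case hQ: (Q u s); last by rewrite hB ?hQ ?mulr0.
by rewrite (hPQ _ _ _ hP hQ) in hR.
Qed.

Lemma mul_single (P Q : sm -> sm -> bool) A B t s u0 :
  (forall t s, ~~ P t s -> ent A t s = 0) -> (forall t s, ~~ Q t s -> ent B t s = 0) ->
  (forall u, u != u0 -> ~~ (P t u && Q u s)) ->
  ent (A *m B) t s = ent A t u0 * ent B u0 s.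
Proof.
move=> hA hB hu; rewrite ent_mul (sum1 (u0 := u0)) // => u /hu.
case hP: (P t u) => /=; last by rewrite hA ?hP ?mul0r.
by move=> hQ; rewrite hB ?mulr0.
Qed.

Definition Ucond (M : MX) :=
  [/\ forall t s, ~~ aU t s -> ent M t s = 0,
      forall i, ent M (sE i) (sE i) = ent M (sH true) (sH true)
    & forall i, ent M (sQ i) (sQ i) = ent M (sH true) (sH true)].

Definition Scond (M : MX) :=
  [/\ forall t s, ~~ aS t s -> ent M t s = 0,
      forall i, ent M (sE i) (sE i) = ent M (sH true) (sH true),
      forall i, ent M (sQ i) (sQ i) = ent M (sH true) (sH true)
    & ent M (sH false) (sH false) = ent M (sH true) (sH true)].

Definition Icond (M : MX) :=
  (forall t s, ~~ aI t s -> ent M t s = 0) /\ \sum_(i < n) ent M (sQ i) (sH false) = 0.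

Lemma Ucond_down M : Ucond M -> downm M.
Proof. case=> h _ _ t s hs; apply: h; apply/negP => /aU_down h'; by rewrite h' in hs. Qed.

Lemma Scond_U M : Scond M -> Ucond M.
Proof. case=> h h1 h2 _; split => // t s hs; apply: h; apply/negP => /aS_aU h'; by rewrite h' in hs. Qed.

Lemma Icond_S M : Icond M -> Scond M.
Proof.
case=> h _; have z : forall t s, ~~ aU t s -> ent M t s = 0.
  by move=> t s hs; apply: h; apply/negP => /aI_aU h'; rewrite h' in hs.
split.
- move=> t s hs; apply: h; move: hs; case: t => [[[a|i]|i]|i]; case: s => [[[b|j]|j]|j] //=.
- by move=> i; rewrite !h.
- by move=> i; rewrite !h.
- by rewrite !h.
Qed.

Lemma Icond_U M : Icond M -> Ucond M.
Proof. by move/Icond_S/Scond_U. Qed.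

Lemma sum_ordS (f : 'I_n -> R) : \sum_(i < n) f (ordS i) = \sum_(i < n) f i.
Proof. by rewrite [RHS](reindex_inj (can_inj (@ordSK n))). Qed.

Ltac sg := let u := fresh "u" in move=> u; case: u => [[[?|?]|?]|?]; rewrite ?eqsm => *;
  rewrite /= ?andbF //; negs; rewrite ?andbF ?andbT //.

Lemma degc (x p : int) : (x == x + p) = (0 == p).
Proof. by rewrite -{1}[x]addr0 (inj_eq (addrI x)). Qed.

Lemma UcondD A B : Ucond A -> Ucond B -> Ucond (A + B).
Proof.
case=> hA a1 a2 [hB b1 b2]; split.
- by move=> t s h; rewrite entD hA ?hB ?addr0.
- by move=> i; rewrite !entD a1 b1.
- by move=> i; rewrite !entD a2 b2.
Qed.

Lemma UcondZ a A : Ucond A -> Ucond (a *: A).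
Proof.
case=> hA a1 a2; split.
- by move=> t s h; rewrite entZ hA ?mulr0.
- by move=> i; rewrite !entZ a1.
- by move=> i; rewrite !entZ a2.
Qed.

Lemma Ucond0 : Ucond 0.
Proof. by split => *; rewrite !ent0. Qed.

Lemma Ucond1 : Ucond 1%:M.
Proof.
split => [t s h|i|i]; rewrite ?ent1 ?eqxx //.
case: eqP h => // ->; by rewrite aU_refl.
Qed.

Lemma UcondC p A : Ucond A -> Ucond (mcomp p A).
Proof.
case=> hA a1 a2; split.
- by move=> t s h; rewrite entK hA ?if_same.
- by move=> i; rewrite !entK /= !degc a1.
- by move=> i; rewrite !entK /= !degc a2.
Qed.

Lemma UcondM A B : Ucond A -> Ucond B -> Ucond (A *m B).
Proof.
move=> uA uB; case: (uA) => hA a1 a2; case: (uB) => hB b1 b2; split.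
- exact: (mul_rel hA hB aU_trans).
- move=> i; rewrite (mul_single (u0 := sE i) hA hB); last by sg.
  rewrite (mul_single (u0 := sH true) hA hB); last by sg.
  by rewrite a1 b1.
- move=> i; rewrite (mul_single (u0 := sQ i) hA hB); last by sg.
  rewrite (mul_single (u0 := sH true) hA hB); last by sg.
  by rewrite a2 b2.
Qed.

Lemma ScondD A B : Scond A -> Scond B -> Scond (A + B).
Proof.
case=> hA a1 a2 a3 [hB b1 b2 b3]; split.
- by move=> t s h; rewrite entD hA ?hB ?addr0.
- by move=> i; rewrite !entD a1 b1.
- by move=> i; rewrite !entD a2 b2.
- by rewrite !entD a3 b3.
Qed.

Lemma ScondZ a A : Scond A -> Scond (a *: A).
Proof.
case=> hA a1 a2 a3; split.
- by move=> t s h; rewrite entZ hA ?mulr0.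
- by move=> i; rewrite !entZ a1.
- by move=> i; rewrite !entZ a2.
- by rewrite !entZ a3.
Qed.

Lemma Scond0 : Scond 0.
Proof. by split => *; rewrite !ent0. Qed.

Lemma Scond1 : Scond 1%:M.
Proof.
split => [t s h|i|i|]; rewrite ?ent1 ?eqxx //.
case: eqP h => // ->; by rewrite aS_refl.
Qed.

Lemma ScondC p A : Scond A -> Scond (mcomp p A).
Proof.
case=> hA a1 a2 a3; split.
- by move=> t s h; rewrite entK hA ?if_same.
- by move=> i; rewrite !entK /= !degc a1.
- by move=> i; rewrite !entK /= !degc a2.
- by rewrite !entK /= !degc a3.
Qed.

Lemma ScondM A B : Scond A -> Scond B -> Scond (A *m B).
Proof.
move=> uA uB; case: (uA) => hA a1 a2 a3; case: (uB) => hB b1 b2 b3; split.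
- exact: (mul_rel hA hB aS_trans).
- move=> i; rewrite (mul_single (u0 := sE i) hA hB); last by sg.
  rewrite (mul_single (u0 := sH true) hA hB); last by sg.
  by rewrite a1 b1.
- move=> i; rewrite (mul_single (u0 := sQ i) hA hB); last by sg.
  rewrite (mul_single (u0 := sH true) hA hB); last by sg.
  by rewrite a2 b2.
- rewrite (mul_single (u0 := sH false) hA hB); last by sg.
  rewrite (mul_single (u0 := sH true) hA hB); last by sg.
  by rewrite a3 b3.
Qed.

Lemma IcondD A B : Icond A -> Icond B -> Icond (A + B).
Proof.
case=> hA a1 [hB b1]; split.
- by move=> t s h; rewrite entD hA ?hB ?addr0.
- by rewrite (eq_bigr _ (fun i _ => entD A B _ _)) big_split /= a1 b1 addr0.
Qed.

Lemma IcondZ a A : Icond A -> Icond (a *: A).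
Proof.
case=> hA a1; split.
- by move=> t s h; rewrite entZ hA ?mulr0.
- by rewrite (eq_bigr _ (fun i _ => entZ a A _ _)) -mulr_sumr a1 mulr0.
Qed.

Lemma Icond0 : Icond 0.
Proof. by split => *; rewrite ?ent0 // big1 // => i _; rewrite ent0. Qed.

Lemma IcondC p A : Icond A -> Icond (mcomp p A).
Proof.
case=> hA a1; split.
- by move=> t s h; rewrite entK hA ?if_same.
- rewrite (eq_bigr (fun i => if (1 == -1 + p) then ent A (sQ i) (sH false) else 0));
    last by move=> i _; rewrite entK.
  by case: (1 == -1 + p :> int); rewrite ?a1 // big1.
Qed.

Lemma IcondUI A B : Ucond A -> Icond B -> Icond (A *m B).
Proof.
case=> hA a1 a2 [hB b1]; split.
- exact: (mul_rel hA hB aUI).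
- rewrite (eq_bigr (fun i => ent A (sH true) (sH true) * ent B (sQ i) (sH false))).
    by rewrite -mulr_sumr b1 mulr0.
  move=> i _; rewrite (mul_single (u0 := sQ i) hA hB) ?a2 //; by sg.
Qed.

Lemma IcondIU A B : Icond A -> Ucond B -> Icond (A *m B).
Proof.
case=> hA a1 [hB b1 b2]; split.
- exact: (mul_rel hA hB aIU).
- rewrite (eq_bigr (fun i => ent A (sQ i) (sH false) * ent B (sH false) (sH false))).
    by rewrite -mulr_suml a1 mul0r.
  move=> i _; rewrite (mul_single (u0 := sH false) hA hB) //; by sg.
Qed.

Definition dUf (M : MX) (t s : sm) : R :=
  match t, s with
  | inl (inl (inr _)), inl (inl (inl false)) => ent M (sH false) (sH false) - ent M (sH true) (sH true)
  | inr i, inl (inl (inl false)) => ent M (sE i) (sH false) - ent M (sE (ordS i)) (sH false)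
  | _, _ => 0
  end.

Lemma deltaU M : Ucond M -> mdelta M = mk (dUf M).
Proof.
move=> uM; have dM := Ucond_down uM; case: uM => hM a1 a2.
apply: mx_eq => t s; rewrite entK.
case: t => [[[a|i]|i]|i]; case: s => [[[b|j]|j]|j]; try (by rewrite tZ).
- by rewrite tEH // a1; case: b; rewrite /= ?subrr ?mulr0 ?mul1r.
- by rewrite tWH // !(hM (sW i)) // addr0 mulr0 oppr0; case: b.
- by rewrite tWE // hM // mul0r.
- rewrite tQH // !(hM (sQ i) (sE _)) // addr0 mulr0 addr0.
  by case: b => //=; rewrite !hM // subr0.
- by rewrite tQE // a1 a2 subrr mulr0.
Qed.

Lemma Ucond_delta M : Ucond M -> Ucond (mdelta M).
Proof.
move=> uM; rewrite deltaU //; split.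
- move=> t s; rewrite entK; case: t => [[[a|i]|i]|i]; case: s => [[[b|j]|j]|j] //=; by case: b.
- by move=> i; rewrite !entK.
- by move=> i; rewrite !entK.
Qed.

Lemma Icond_delta0 M : Ucond M -> ent M (sH false) (sH false) = ent M (sH true) (sH true) ->
  Icond (mdelta M).
Proof.
move=> uM e; rewrite deltaU //; split.
- move=> t s; rewrite entK; case: t => [[[a|i]|i]|i]; case: s => [[[b|j]|j]|j] //=;
  case: b => //=; by rewrite e subrr.
- rewrite (eq_bigr (fun i => ent M (sE i) (sH false) - ent M (sE (ordS i)) (sH false))).
    by rewrite sumrB (sum_ordS (fun i => ent M (sE i) (sH false))) subrr.
  by move=> i _; rewrite entK.
Qed.

Lemma Scond_delta M : Scond M -> Scond (mdelta M).
Proof.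
move=> sM; have uM := Scond_U sM; case: (sM) => _ _ _ e.
exact: Icond_S (Icond_delta0 uM e).
Qed.

Lemma Icond_deltaS M : Scond M -> Icond (mdelta M).
Proof. move=> sM; case: (sM) => _ _ _ e; exact: Icond_delta0 (Scond_U sM) e. Qed.

Lemma Icond_delta M : Icond M -> Icond (mdelta M).
Proof. by move/Icond_S/Icond_deltaS. Qed.

Definition P (C : MX -> Prop) (F : amb n R) := exists M, C M /\ F = emb M.

Lemma Idown M : Icond M -> downm M.
Proof. by move/Icond_U/Ucond_down. Qed.
Lemma Sdown M : Scond M -> downm M.
Proof. by move/Scond_U/Ucond_down. Qed.

Lemma submod_of (C : MX -> Prop) : (forall M, C M -> downm M) -> C 0 ->
  (forall A B, C A -> C B -> C (A + B)) -> (forall a A, C A -> C (a *: A)) ->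
  (forall p A, C A -> C (mcomp p A)) -> (forall A, C A -> C (mdelta A)) -> dg_submod (P C).
Proof.
move=> hd h0 hD hZ hC hdel; split.
- by exists 0; rewrite amb0_emb.
- by move=> x y [A [cA ->]] [B [cB ->]]; exists (A + B); rewrite ambD_emb; split => //; exact: hD.
- by move=> a x [A [cA ->]]; exists (a *: A); rewrite ambZ_emb; split => //; exact: hZ.
- by move=> p x [A [cA ->]]; exists (mcomp p A); rewrite comp_emb; split => //; exact: hC.
- by move=> x [A [cA ->]]; exists (mdelta A); rewrite (emb_delta (hd _ cA)); split => //; exact: hdel.
Qed.

Lemma subU : dg_submod (P Ucond).
Proof. exact: (submod_of Ucond_down Ucond0 UcondD UcondZ UcondC Ucond_delta). Qed.
Lemma subS : dg_submod (P Scond).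
Proof. exact: (submod_of Sdown Scond0 ScondD ScondZ ScondC Scond_delta). Qed.
Lemma subI : dg_submod (P Icond).
Proof. exact: (submod_of Idown Icond0 IcondD IcondZ IcondC Icond_delta). Qed.

Lemma algU : dg_subalg (P Ucond).
Proof.
split.
- by move=> x [M [cM ->]]; apply: inEnd_emb; exact: Ucond_down.
- exact: subU.
- by exists 1%:M; rewrite amb1_emb; split => //; exact: Ucond1.
- move=> x y [A [cA ->]] [B [cB ->]]; exists (A *m B); split; first exact: UcondM.
  by rewrite emb_mul //; exact: Ucond_down.
Qed.

Lemma idealUI : dg_ideal (P Ucond) (P Icond).
Proof.
split.
- by move=> x [M [cM ->]]; exists M; split => //; exact: Icond_U.
- exact: subI.
- move=> x y [A [cA ->]] [B [cB ->]]; exists (A *m B); split; first exact: IcondUI.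
  by rewrite emb_mul //; [exact: Ucond_down | exact: Idown].
- move=> x y [A [cA ->]] [B [cB ->]]; exists (A *m B); split; first exact: IcondIU.
  by rewrite emb_mul //; [exact: Idown | exact: Ucond_down].
Qed.

Lemma partS : [/\ psubset (P Icond) (P Scond), psubset (P Scond) (P Ucond), dg_submod (P Scond)
       & (P Scond) (@amb1 n R) /\ (forall x y, P Scond x -> P Scond y -> P Scond (ambM x y))]
     /\ (forall x, P Scond x -> P Icond (delta x)).
Proof.
split; first split.
- by move=> x [M [cM ->]]; exists M; split => //; exact: Icond_S.
- by move=> x [M [cM ->]]; exists M; split => //; exact: Scond_U.
- exact: subS.
- split; first by exists 1%:M; rewrite amb1_emb; split => //; exact: Scond1.
  move=> x y [A [cA ->]] [B [cB ->]]; exists (A *m B); split; first exact: ScondM.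
  by rewrite emb_mul //; exact: Sdown.
- move=> x [M [cM ->]]; exists (mdelta M); split; first exact: Icond_deltaS.
  by rewrite emb_delta //; exact: Sdown.
Qed.

Lemma sub4 (V : zmodType) (a b c d : V) : a - b - (c - d) = a - c - (b - d).
Proof. by rewrite !opprB !addrA [a - b + d]addrAC [a - c + d]addrAC addrAC. Qed.

Lemma mdeltaB A B : mdelta (A - B) = mdelta A - mdelta B.
Proof.
rewrite /mdelta !mulmxBr !mulmxBl; exact: sub4.
Qed.

Lemma mdelta0 : mdelta 0 = 0.
Proof. by rewrite /mdelta mulmx0 mulmx0 !mul0mx subr0. Qed.

Lemma zeroP_emb M : downm M -> zeroP (emb M) -> M = 0.
Proof. by move=> dM; rewrite /zeroP amb0_emb => /emb_inj; apply => //; exact: down0. Qed.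

Lemma PI_emb M : downm M -> P Icond (emb M) -> Icond M.
Proof. by move=> dM [M' [cM' /emb_inj e]]; rewrite e //; exact: Idown. Qed.

Lemma cyc_const (f : 'I_n -> R) : (forall i, f (ordS i) = f i) -> forall i, f i = f i0.
Proof.
move=> h [k hk]; elim: k hk => [|k IH] hk; first by congr f; apply: val_inj.
have hk' : (k < n)%N by apply: ltnW.
have -> : Ordinal hk = ordS (Ordinal hk') by apply: val_inj; rewrite /= modn_small.
by rewrite h IH.
Qed.

Definition tel (r : 'I_n -> R) (i : 'I_n) : R := \sum_(k < n | (i <= k)%N) r k.

Lemma telP (r : 'I_n -> R) : \sum_(k < n) r k = 0 -> forall i, tel r i - tel r (ordS i) = r i.
Proof.
move=> hs i; rewrite /tel (bigD1 i) //=.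
case: (ltnP i.+1 n) => h.
- have e : \sum_(k < n | (i <= k)%N && (k != i)) r k = \sum_(k < n | (i.+1 <= k)%N) r k.
    by apply: eq_bigl => k; rewrite ltn_neqAle eq_sym andbC -(inj_eq val_inj).
  by rewrite modn_small // e addrK.
- have e : i.+1 = n by apply/eqP; rewrite eqn_leq h ltn_ord.
  rewrite e modnn.
  have -> : \sum_(k < n | (0 <= k)%N) r k = 0 by rewrite -[RHS]hs; apply: eq_bigl.
  rewrite subr0 big1 ?addr0 // => k /andP[h1 h2].
  have h3 : (k <= i)%N by rewrite -ltnS e.
  by move: h2; rewrite -(inj_eq val_inj) /= eqn_leq h1 h3.
Qed.

Lemma sumI_nz (F : 'I_n -> R) (Pr : pred 'I_n) : \sum_(k | Pr k) F k != 0 -> exists k, F k != 0.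
Proof.
move=> h; case: (pickP (fun u => F u != 0)) => [u hu|none]; first by exists u.
by move: h; rewrite big1 ?eqxx // => u _; move: (none u) => /negbFE/eqP.
Qed.

Lemma subr_nz (a b : R) : a - b != 0 -> a != 0 \/ b != 0.
Proof. case: (eqVneq a 0) => [->|]; [rewrite sub0r oppr_eq0; by right | by left]. Qed.
Lemma addr_nz (a b : R) : a + b != 0 -> a != 0 \/ b != 0.
Proof. case: (eqVneq a 0) => [->|]; [rewrite add0r; by right | by left]. Qed.

Lemma hp_of (a b p : int) : a = b + p -> p = a - b.
Proof. by move=> ->; rewrite addrAC subrr add0r. Qed.

Lemma down_delta M : downm M -> downm (mdelta M).
Proof. move=> dM; apply: downB; [exact: downM downDmx dM | exact: downM (downS dM) downDmx]. Qed.

Definition Yf (M : MX) (t s : sm) : R :=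
  match t, s with
  | inl (inr i), inr j => if j == i then ent M (sW i) (sE i) else 0
  | inl (inl (inr i)), inl (inl (inr j)) => if j == i then ent M (sE i) (sH true) else 0
  | inr i, inr j => if j == i then ent M (sE i) (sH true) - ent M (sQ i) (sE i) else 0
  | inl (inr i), inl (inl (inr j)) => if j == i then ent M (sW i) (sH true) else 0
  | inr i, inl (inl (inr j)) => if j == i then - ent M (sQ i) (sH true) else 0
  | _, _ => 0
  end.

Lemma Yf_down M : downm (mk (Yf M)).
Proof.
move=> t s; rewrite entK.
case: t => [[[a|i]|i]|i]; case: s => [[[b|j]|j]|j] //=;
  try (by rewrite eq_sym => /negbTE->); by rewrite negb_or eq_sym => /andP[/negbTE-> _].
Qed.

Lemma Yf_hom M p : mhom p M -> mhom (p - 1) (mk (Yf M)).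
Proof.
move=> hM t s; rewrite entK.
case: t => [[[a|i]|i]|i]; case: s => [[[b|j]|j]|j]; rewrite /= ?eqxx //;
  case: ifP => _; rewrite ?eqxx //.
all: try rewrite oppr_eq0.
all: try (by move=> h; move: (hM _ _ h) => /hp_of ->).
move=> h; case: (subr_nz h) => h'; by move: (hM _ _ h') => /hp_of ->.
Qed.

Lemma alg1 (a b c d : R) : a - b + (-1) * (c + d) = 0 ->
  d - (-1) * (b - (a - c)) = 0.
Proof.
rewrite !mulN1r opprK => h; rewrite -[RHS]oppr0 -h.
rewrite !opprD !opprK.
by rewrite [RHS]addrA [RHS]addrC; congr (_ + _); rewrite addrCA addrA.
Qed.

Lemma q1_U M : downm M -> mdelta M = 0 -> Ucond (M - mdelta (mk (Yf M))).
Proof.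
move=> dM cM; have dY := Yf_down M.
have c : forall t s, ent (mdelta M) t s = 0 by move=> t s; rewrite cM ent0.
have hne := ordS_neq.
split.
- move=> t s hU; rewrite entB.
  case hst: (stle (sm_strat t) (sm_strat s)); last by rewrite dM ?(down_delta dY) ?hst ?subr0.
  move: hU hst; case: t => [[[a|i]|i]|i]; case: s => [[[b|j]|j]|j] //=.
  all: try (by move=> /negbTE ->).
  + case: b => //= _ _.
    by rewrite tEH // !entK /= eqxx sub0r mulN1r opprK subrr.
  + case: b => //= _ _.
    by rewrite tWH // !entK /= eqxx (negbTE (hne i)) addr0 mulN1r !opprK subrr.
  + move=> _ hst; rewrite tWE // entK /= eqxx.
    case: (j =P i) => [e|ne]; first by subst j; rewrite mulr1 subrr.
    have ej : j = ordS i.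
      move: hst; rewrite pred_ordS; case/orP => /eqP // e; by case: ne.
    subst j; rewrite eqxx ?(negbTE (hne i)) mulrN1 opprK.
    have := c (sW i) (sH false); rewrite tWH // mul1r => /eqP; rewrite oppr_eq0 => /eqP.
    by rewrite addrC.
  + move=> _ /eqP ->; rewrite tZ // subr0.
    by have := c (sW j) (sE j); rewrite tWE // /= eqxx mulr1.
  + case: b => //= _ _.
    rewrite tQH // !entK /= eqxx (negbTE (hne i)) addr0 subrr add0r.
    by rewrite mulN1r opprK subrr.
  + move=> _ hst; rewrite tQE // !entK /= !eqxx.
    case: (j =P i) => [e|ne]; first by subst j; rewrite mul1r subKr subrr.
    have ej : j = ordS i.
      move: hst; rewrite pred_ordS; case/orP => /eqP // e; by case: ne.
    subst j; rewrite eqxx ?(negbTE (hne i)).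
    have := c (sQ i) (sH true); rewrite tQH //.
    exact: alg1.
- move=> i; rewrite !(entB M (mdelta (mk (Yf M)))) !tZ // !subr0.
  have := c (sE i) (sH true); rewrite tEH // mulN1r => /eqP; rewrite oppr_eq0 subr_eq0 => /eqP.
  by move=> ->.
- move=> i; rewrite !(entB M (mdelta (mk (Yf M)))) !tZ // !subr0.
  have := c (sE i) (sH true); rewrite tEH // mulN1r => /eqP; rewrite oppr_eq0 subr_eq0 => /eqP ->.
  have := c (sQ i) (sE i); rewrite tQE // /= eqxx mul1r => /eqP; rewrite subr_eq0 => /eqP ->.
  by [].
Qed.

Definition Y2f (Y : MX) (t s : sm) : R :=
  match t, s with
  | inl (inl (inl false)), inl (inl (inl false)) => ent Y (sH false) (sH false) - ent Y (sH true) (sH true)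
  | inl (inl (inr i)), inl (inl (inl false)) => ent Y (sE i) (sH false) + ent Y (sE i) (sH true)
  | _, _ => 0
  end.

Lemma Y2f_U Y : Ucond (mk (Y2f Y)).
Proof.
split.
- move=> t s; rewrite entK; case: t => [[[a|i]|i]|i]; case: s => [[[b|j]|j]|j] //=;
  by try (case: a); try (case: b).
- by move=> i; rewrite !entK.
- by move=> i; rewrite !entK.
Qed.

Lemma Y2f_hom q Y : mhom q Y -> mhom q (mk (Y2f Y)).
Proof.
move=> hY t s; rewrite entK; case: t => [[[a|i]|i]|i]; case: s => [[[b|j]|j]|j] //=;
  try (by rewrite eqxx); try (case: a); try (case: b); rewrite ?eqxx //.
- by move=> h; case: (subr_nz h) => h'; move: (hY _ _ h').
- by move=> h; case: (addr_nz h) => h'; move: (hY _ _ h').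
Qed.

Lemma alg2 (a0 b0 a1 b1 x : R) : a1 - b1 + (-1) * x = 0 ->
  a0 - b0 + 1 * x = a0 + a1 - (b0 + b1).
Proof.
rewrite mulN1r mul1r => /eqP; rewrite subr_eq0 => /eqP <-.
by rewrite opprD addrACA.
Qed.

Lemma q1b Y : downm Y -> Ucond (mdelta Y) -> mdelta (mk (Y2f Y)) = mdelta Y.
Proof.
move=> dY [h _ _]; rewrite deltaU; last exact: Y2f_U.
apply: mx_eq => t s; rewrite entK.
case hU: (aU t s); last by rewrite h ?hU //; case: t hU => [[[a|i]|i]|i]; case: s => [[[b|j]|j]|j] //=; case: b.
move: hU; case: t => [[[a|i]|i]|i]; case: s => [[[b|j]|j]|j] //= hU; try (by rewrite tZ).
- case: b hU => //= _.
  rewrite tEH // !entK /= mul1r.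
  have := h (sE i) (sH true) isT; rewrite tEH // mulN1r => /eqP; rewrite oppr_eq0 subr_eq0 => /eqP ->.
  by rewrite subr0.
- case: b hU => //= _.
  rewrite tWH //; have := h (sW i) (sH true) isT; rewrite tWH // mulN1r opprK => ->.
  by rewrite mulr0 oppr0.
- case: b hU => //= _.
  rewrite !entK /= tQH //; apply: esym; apply: alg2.
  have := h (sQ i) (sH true) isT; by rewrite tQH.
Qed.

Lemma qiso1 : qiso (P Ucond) (@zeroP n R) (@inEnd n R) (@zeroP n R).
Proof.
split.
- by move=> x [M [cM ->]]; apply: inEnd_emb; exact: Ucond_down.
- by [].
move=> p; split.
- move=> z [ez hz cz].
  have [Mz [dMz ez']] := inEnd_ex ez; subst z.
  have hMz : mhom p Mz by apply/(homog_emb p dMz).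
  have cMz : mdelta Mz = 0.
    by apply: zeroP_emb; [exact: down_delta | rewrite -emb_delta].
  have dY : downm (mk (Yf Mz)) := Yf_down Mz.
  have hY : mhom (p - 1) (mk (Yf Mz)) := Yf_hom hMz.
  have dX : downm (Mz - mdelta (mk (Yf Mz))) := downB dMz (down_delta dY).
  have hdY : mhom p (mdelta (mk (Yf Mz))) by have := mhom_delta hY; rewrite subrK.
  have hX : mhom p (Mz - mdelta (mk (Yf Mz))) by apply: mhomB.
  exists (emb (Mz - mdelta (mk (Yf Mz)))); split.
  + split.
    * by exists (Mz - mdelta (mk (Yf Mz))); split => //; exact: q1_U.
    * by apply/(homog_emb p dX).
    * by rewrite /zeroP emb_delta // mdeltaB mdelta2 cMz subr0 amb0_emb.
  + rewrite ambB_emb subKr; split.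
    * exact: inEnd_emb (down_delta dY).
    * by apply/(homog_emb p (down_delta dY)).
    * exists (emb (mk (Yf Mz))); split.
      -- exact: inEnd_emb.
      -- by apply/(homog_emb (p - 1) dY).
      -- by rewrite emb_delta // ambB_emb subrr /zeroP amb0_emb.
- move=> x [[X [uX ->]] hx cx] [_ _ [y [ey hy zy]]].
  have dX := Ucond_down uX.
  have [Yd [dYd ey']] := inEnd_ex ey; subst y.
  have hYd : mhom (p - 1) Yd by apply/(homog_emb (p - 1) dYd).
  have eX : X = mdelta Yd.
    apply/eqP; rewrite -subr_eq0; apply/eqP; apply: zeroP_emb.
      by apply: downB => //; exact: down_delta.
    by rewrite -ambB_emb -emb_delta.
  have uY : Ucond (mdelta Yd) by rewrite -eX.
  split.
  + by exists X.
  + exact: hx.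
  + exists (emb (mk (Y2f Yd))); split.
    * by exists (mk (Y2f Yd)); split => //; exact: Y2f_U.
    * by apply/(homog_emb (p - 1) (Ucond_down (Y2f_U Yd))); exact: Y2f_hom.
    * rewrite emb_delta; last exact: Ucond_down (Y2f_U Yd).
      by rewrite ambB_emb q1b // eX subrr /zeroP amb0_emb.
Qed.

Lemma UcondB A B : Ucond A -> Ucond B -> Ucond (A - B).
Proof.
case=> hA a1 a2 [hB b1 b2]; split.
- by move=> t s h; rewrite entB hA ?hB ?subr0.
- by move=> i; rewrite !entB a1 b1.
- by move=> i; rewrite !entB a2 b2.
Qed.

Lemma etaZ Z : Ucond Z -> Icond (mdelta Z) ->
  ent Z (sH false) (sH false) = ent Z (sH true) (sH true).
Proof.
move=> uZ [h _]; have hz : ~~ aI (sE i0) (sH false) by rewrite /aI eqxx.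
have := h _ _ hz.
by rewrite deltaU // entK /= => /eqP; rewrite subr_eq0 => /eqP.
Qed.

Definition Yhf (Z : MX) (t s : sm) : R :=
  match t, s with
  | inl (inl (inl false)), inl (inl (inl false)) => ent Z (sE i0) (sH false)
  | _, _ => 0
  end.

Lemma Yh_U Z : Ucond (mk (Yhf Z)).
Proof.
split.
- move=> t s; rewrite entK; case: t => [[[a|i]|i]|i]; case: s => [[[b|j]|j]|j] //=;
  by try (case: a); try (case: b).
- by move=> i; rewrite !entK.
- by move=> i; rewrite !entK.
Qed.

Lemma Yh_hom p Z : mhom p Z -> mhom (p - 1) (mk (Yhf Z)).
Proof.
move=> hZ t s; rewrite entK; case: t => [[[a|i]|i]|i]; case: s => [[[b|j]|j]|j] //=;
  try (by rewrite eqxx); try (case: a); try (case: b); rewrite ?eqxx //.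
by move=> h; move: (hZ _ _ h) => /hp_of ->.
Qed.

Lemma Yh_delta Z t s : ent (mdelta (mk (Yhf Z))) t s =
  match t, s with
  | inl (inl (inr _)), inl (inl (inl false)) => ent Z (sE i0) (sH false)
  | _, _ => 0
  end.
Proof.
rewrite deltaU; last exact: Yh_U.
rewrite entK; case: t => [[[a|i]|i]|i]; case: s => [[[b|j]|j]|j] //=; try (case: b) => //.
all: by rewrite !entK /= subr0 // subrr.
Qed.

Definition Cf (Z : MX) (t s : sm) : R :=
  match t, s with
  | inl (inl (inr i)), inl (inl (inl false)) => ent Z (sE i) (sH false)
  | _, _ => 0
  end.

Lemma C_U Z : Ucond (mk (Cf Z)).
Proof.
split.
- move=> t s; rewrite entK; case: t => [[[a|i]|i]|i]; case: s => [[[b|j]|j]|j] //=;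
  by try (case: a); try (case: b).
- by move=> i; rewrite !entK.
- by move=> i; rewrite !entK.
Qed.

Lemma C_hom p Z : mhom p Z -> mhom p (mk (Cf Z)).
Proof.
move=> hZ t s; rewrite entK; case: t => [[[a|i]|i]|i]; case: s => [[[b|j]|j]|j] //=;
  try (by rewrite eqxx); try (case: a); try (case: b); rewrite ?eqxx //.
by move=> h; move: (hZ _ _ h).
Qed.

Lemma C_delta Z : Ucond Z -> ent Z (sH false) (sH false) = ent Z (sH true) (sH true) ->
  mdelta Z = mdelta (mk (Cf Z)).
Proof.
move=> uZ e; rewrite deltaU // deltaU; last exact: C_U.
apply: mx_eq => t s; rewrite !entK.
case: t => [[[a|i]|i]|i]; case: s => [[[b|j]|j]|j] //=; try (case: b) => //.
- by rewrite !entK /= e !subrr.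
- by rewrite !entK.
Qed.

Lemma U_to_S A : Ucond A -> ent A (sE i0) (sH false) = 0 ->
  ent A (sH false) (sH false) = ent A (sH true) (sH true) -> Scond A.
Proof.
case=> h a1 a2 e0 e; split => //.
move=> t s; case: t => [[[a|i]|i]|i]; case: s => [[[b|j]|j]|j]; try (exact: h).
rewrite /aS negb_and negbK => /orP[hb|].
- by apply: h; rewrite /= hb.
- move=> /negPn/eqP ->; case: b => //; exact: h.
Qed.

Lemma qiso3 : qiso (P Scond) (P Icond) (P Ucond) (P Icond).
Proof.
split.
- by move=> x [M [cM ->]]; exists M; split => //; exact: Scond_U.
- by [].
move=> p; split.
- move=> z [[Z [uZ ->]] hz iz].
  have dZ := Ucond_down uZ.
  have hZ : mhom p Z by apply/(homog_emb p dZ).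
  have iZ : Icond (mdelta Z) by apply: PI_emb; [exact: down_delta | rewrite -emb_delta].
  have eta := etaZ uZ iZ.
  have uYh := Yh_U Z; have dYh := Ucond_down uYh.
  have hYh := Yh_hom hZ.
  have hdYh : mhom p (mdelta (mk (Yhf Z))) by have := mhom_delta hYh; rewrite subrK.
  have sX : Scond (Z - mdelta (mk (Yhf Z))).
    apply: U_to_S.
    + apply: UcondB => //; exact: Ucond_delta.
    + by rewrite entB Yh_delta subrr.
    + by rewrite !(entB Z) !Yh_delta /= !subr0.
  have dX := Sdown sX.
  exists (emb (Z - mdelta (mk (Yhf Z)))); split.
  + split.
    * by exists (Z - mdelta (mk (Yhf Z))).
    * by apply/(homog_emb p dX); apply: mhomB.
    * by exists (mdelta (Z - mdelta (mk (Yhf Z)))); split; [exact: Icond_deltaS | rewrite emb_delta].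
  + rewrite ambB_emb subKr; split.
    * by exists (mdelta (mk (Yhf Z))); split => //; exact: Ucond_delta.
    * by apply/(homog_emb p (down_delta dYh)).
    * exists (emb (mk (Yhf Z))); split.
      -- by exists (mk (Yhf Z)).
      -- by apply/(homog_emb (p - 1) dYh).
      -- by rewrite emb_delta // ambB_emb subrr; exists 0; split => //; exact: Icond0.
- move=> x [[X [sX ->]] hx ix] [_ _ [y [[Y [uY ->]] hy iy]]].
  have dX := Sdown sX; have dY := Ucond_down uY.
  have iXY : Icond (X - mdelta Y).
    apply: PI_emb; first by apply: downB => //; exact: down_delta.
    by rewrite -ambB_emb -emb_delta.
  have eY : ent Y (sH false) (sH false) = ent Y (sH true) (sH true).
    case: iXY => h _; have hz : ~~ aI (sE i0) (sH false) by rewrite /aI eqxx.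
    have := h _ _ hz; rewrite entB deltaU // entK /=.
    case: sX => h' _ _ _; rewrite h' ?sub0r; last by rewrite /aS eqxx.
    by move=> /eqP; rewrite oppr_eq0 subr_eq0 => /eqP.
  split.
  + by exists X.
  + exact: hx.
  + exists (emb 0); split.
    * by exists 0; split => //; exact: Scond0.
    * by apply/(homog_emb (p - 1) down0); exact: mhom0.
    * rewrite (emb_delta down0) mdelta0 ambB_emb subr0; exists X; split => //.
      rewrite -(subrK (mdelta Y) X); apply: IcondD => //.
      exact: Icond_delta0.
Qed.

Definition Y3f (Y : MX) (r : 'I_n -> R) (t s : sm) : R :=
  match t, s with
  | inl (inl (inl false)), inl (inl (inl false)) => ent Y (sH false) (sH false) - ent Y (sH true) (sH true)
  | inl (inl (inr i)), inl (inl (inl false)) => ent Y (sE i) (sH false) + tel r i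
  | _, _ => 0
  end.

Lemma Y3_U Y r : Ucond (mk (Y3f Y r)).
Proof.
split.
- move=> t s; rewrite entK; case: t => [[[a|i]|i]|i]; case: s => [[[b|j]|j]|j] //=;
  by try (case: a); try (case: b).
- by move=> i; rewrite !entK.
- by move=> i; rewrite !entK.
Qed.

Lemma alg3 (a b t t' r : R) : t - t' = r -> a + t - (b + t') = r + (a - b).
Proof. by move=> <-; rewrite opprD addrACA addrC. Qed.

Lemma qiso2 : qiso (P Ucond) (@zeroP n R) (P Ucond) (P Icond).
Proof.
split.
- by [].
- by move=> x ->; exists 0; split; [exact: Icond0 | exact: amb0_emb].
move=> p; split.
- move=> z [[Z [uZ ->]] hz iz].
  have dZ := Ucond_down uZ.
  have hZ : mhom p Z by apply/(homog_emb p dZ).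
  have iZ : Icond (mdelta Z) by apply: PI_emb; [exact: down_delta | rewrite -emb_delta].
  have eta := etaZ uZ iZ.
  have uC := C_U Z; have dC := Ucond_down uC; have hC := C_hom hZ.
  have uX : Ucond (Z - mk (Cf Z)) by apply: UcondB.
  have dX := Ucond_down uX.
  have uYh := Yh_U Z; have dYh := Ucond_down uYh.
  have hYh := Yh_hom hZ.
  exists (emb (Z - mk (Cf Z))); split.
  + split.
    * by exists (Z - mk (Cf Z)).
    * by apply/(homog_emb p dX); apply: mhomB.
    * by rewrite emb_delta // mdeltaB (C_delta uZ eta) subrr /zeroP amb0_emb.
  + rewrite ambB_emb subKr; split.
    * by exists (mk (Cf Z)).
    * by apply/(homog_emb p dC).
    * exists (emb (mk (Yhf Z))); split.
      -- by exists (mk (Yhf Z)).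
      -- by apply/(homog_emb (p - 1) dYh).
      -- rewrite emb_delta // ambB_emb; exists (mk (Cf Z) - mdelta (mk (Yhf Z))); split => //.
         split.
         ++ move=> t s; rewrite entB Yh_delta entK.
            case: t => [[[a|i]|i]|i]; case: s => [[[b|j]|j]|j] //=; rewrite ?subrr //;
            case: b => //=; rewrite ?subrr //.
            by rewrite negbK => /eqP ->; rewrite subrr.
         ++ by apply: big1 => i _; rewrite entB Yh_delta entK /= subrr.
- move=> x [[X [uX ->]] hx cx] [_ _ [y [[Y [uY ->]] hy iy]]].
  have dX := Ucond_down uX; have dY := Ucond_down uY.
  have hX : mhom p X by apply/(homog_emb p dX).
  have hY : mhom (p - 1) Y by apply/(homog_emb (p - 1) dY).
  have cX : mdelta X = 0 by apply: zeroP_emb; [exact: down_delta | rewrite -emb_delta].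
  have iXY : Icond (X - mdelta Y).
    apply: PI_emb; first by apply: downB => //; exact: down_delta.
    by rewrite -ambB_emb -emb_delta.
  case: (iXY) => hI hs.
  set r := fun i => ent (X - mdelta Y) (sQ i) (sH false).
  have hr : \sum_(i < n) r i = 0 by [].
  have tr := telP hr.
  have e0 : ent X (sE i0) (sH false) = ent Y (sH false) (sH false) - ent Y (sH true) (sH true).
    have hz : ~~ aI (sE i0) (sH false) by rewrite /aI eqxx.
    have := hI _ _ hz; rewrite entB deltaU // entK /= => /eqP; rewrite subr_eq0 => /eqP.
    done.
  have ec : forall i, ent X (sE i) (sH false) = ent X (sE i0) (sH false).
    apply: (cyc_const (f := fun i => ent X (sE i) (sH false))) => i.
    have := congr1 (fun M => ent M (sQ i) (sH false)) cX.
    rewrite deltaU // !entK ent0 /= => /eqP; rewrite subr_eq0 => /eqP.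
    by move=> ->.
  have uY' := Y3_U Y r; have dY' := Ucond_down uY'.
  have hY' : mhom (p - 1) (mk (Y3f Y r)).
    move=> t s; rewrite entK; case: t => [[[a|i]|i]|i]; case: s => [[[b|j]|j]|j] //=;
      try (by rewrite eqxx); try (case: a); try (case: b); rewrite ?eqxx //.
    + by move=> h; case: (subr_nz h) => h'; move: (hY _ _ h').
    + move=> h; case: (addr_nz h) => h'; first by move: (hY _ _ h').
      have [k hk] := sumI_nz h'.
      have hXY : mhom p (X - mdelta Y).
        by apply: mhomB => //; have := mhom_delta hY; rewrite subrK.
      by move: (hXY _ _ hk) => /= /hp_of ->.
  have eX : mdelta (mk (Y3f Y r)) = X.
    have gen : forall t s, aI t s = false -> dUf Y t s = 0 -> ent X t s = 0.
      move=> t s h1 h2; have := hI t s; rewrite h1 entB deltaU // entK h2 subr0; by apply.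
    rewrite deltaU //; apply: mx_eq => t s; rewrite entK.
    case: t => [[[a|i]|i]|i]; case: s => [[[b|j]|j]|j] //=;
      try (by rewrite gen //; try (case: a); try (case: b)).
    + case: b; first by rewrite gen.
      by rewrite !entK /= subr0 ec e0.
    + case: b; first by rewrite gen.
      rewrite !entK /=.
      have := congr1 (fun M => ent M (sQ i) (sH false)) (subrK (mdelta Y) X).
      rewrite entD -/(r i) deltaU // entK /= => <-.
      exact: alg3.
  split.
  + by exists X.
  + exact: hx.
  + exists (emb (mk (Y3f Y r))); split.
    * by exists (mk (Y3f Y r)).
    * by apply/(homog_emb (p - 1) dY').
    * by rewrite emb_delta // ambB_emb eX subrr /zeroP amb0_emb.
Qed.
End Main.

Theorem proposition5p8 (R : idomainType) (hR : is_pid R) (n : nat) (hn : (2 <= n)%N) :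
  exists U I S : amb n R -> Prop,
    (* U is a dg subalgebra of End J, I a two-sided dg ideal of U *)
    (dg_subalg U /\ dg_ideal U I) /\
    (* S/I is a dg subalgebra of U/I with zero differential (playing the role of H(U/I)) *)
    ([/\ psubset I S, psubset S U, dg_submod S
       & S (@amb1 n R) /\ (forall x y, S x -> S y -> S (ambM x y))]
     /\ (forall x, S x -> I (delta x))) /\
    [/\ qiso U (@zeroP n R) (@inEnd n R) (@zeroP n R),  (* End J <-- U *)
        qiso U (@zeroP n R) U I                         (* U -->> U/I *)
      & qiso S I U I].                                  (* U/I <-- S/I = H(U/I) *)
Proof.
exists (P (@Ucond n R)), (P (Icond hn)), (P (Scond hn)).
split; first split; [exact: algU hn | exact: idealUI hn | ].
split; first exact: partS.
split; [exact: qiso1 hn | exact: qiso2 | exact: qiso3].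
Qed.
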